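(* Let $a,b,c\in\mathbb{R}^n$. Then the set $\{X\in\mathbb{S}^n_+:\ a^\top Xc\ge 0,\ b^\top Xc\ge 0\}$ is rank-one generated.
   Context: $\mathbb{S}^n_+$ is the cone of real symmetric positive semidefinite $n\times n$ matrices. A closed convex cone $\mathcal{S}\subseteq\mathbb{S}^n_+$ is rank-one generated (ROG) if $\mathcal{S}=\mathrm{conv}(\mathcal{S}\cap\{xx^\top:x\in\mathbb{R}^n\})$. *)

(* Defs.v *)
From HB Require Import structures.
From mathcomp Require Import all_boot all_order all_algebra.
From mathcomp Require Import all_classical all_reals all_analysis.
Set Implicit Arguments. Unset Strict Implicit. Unset Printing Implicit Defensive.
Import Order.TTheory GRing.Theory Num.Theory.
Import numFieldNormedType.Exports.
Local Open Scope classical_set_scope.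
Local Open Scope ring_scope.

Definition psd (R : realType) (n : nat) (X : 'M[R]_n) : Prop :=
  X^T = X /\ forall v : 'cV[R]_n, 0 <= (v^T *m X *m v) 0 0.

Definition rank_one_psd (R : realType) (n : nat) (X : 'M[R]_n) : Prop :=
  exists x : 'cV[R]_n, X = x *m x^T.

Definition conv_hull (R : realType) (n : nat) (A : set 'M[R]_n) : set 'M[R]_n :=
  [set X | exists (k : nat) (w : 'I_k -> R) (Y : 'I_k -> 'M[R]_n),
     (forall i, 0 <= w i) /\ \sum_(i < k) w i = 1 /\
     (forall i, A (Y i)) /\ X = \sum_(i < k) w i *: Y i].

Definition closed_convex_cone (R : realType) (n : nat) (S : set 'M[R]_n) : Prop :=
  closed S /\ S 0 /\
  (forall X Y, S X -> S Y -> S (X + Y)) /\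
  (forall (t : R) X, 0 <= t -> S X -> S (t *: X)).

Definition ROG (R : realType) (n : nat) (S : set 'M[R]_n) : Prop :=
  closed_convex_cone S /\ S `<=` [set X | psd X] /\
  S = conv_hull (S `&` [set X | rank_one_psd X]).

Definition two_bilinear_set (R : realType) (n : nat) (a b c : 'cV[R]_n)
  : set 'M[R]_n :=
  [set X | psd X /\ 0 <= (a^T *m X *m c) 0 0 /\ 0 <= (b^T *m X *m c) 0 0].

(* Main.v *)
Require Import Defs.
From HB Require Import structures.
From mathcomp Require Import all_boot all_order all_algebra.
From mathcomp Require Import all_classical all_reals all_analysis.
From mathcomp Require Import ring lra.
Set Implicit Arguments. Unset Strict Implicit. Unset Printing Implicit Defensive.
Import Order.TTheory GRing.Theory Num.Theory.
Import numFieldNormedType.Exports.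
Local Open Scope classical_set_scope.
Local Open Scope ring_scope.
Section Top.
Variables (R : realType) (n : nat).

Lemma cont_sum (I : Type) (r : seq I) (F : I -> 'M[R]_n -> R) :
  (forall i, continuous (F i)) -> continuous (fun X => \sum_(i <- r) F i X).
Proof.
move=> HF X; elim: r => [|i r IH].
  under eq_fun do rewrite big_nil. exact: cst_continuous.
under eq_fun do rewrite big_cons.
exact: (continuousD (HF i X) IH).
Qed.

Lemma cont_q (u v : 'cV[R]_n) : continuous (fun X : 'M[R]_n => (u^T *m X *m v) 0 0).
Proof.
have -> : (fun X : 'M[R]_n => (u^T *m X *m v) 0 0) =
  (fun X => \sum_(j < n) \sum_(i < n) (u i 0 * v j 0) * X i j).
  apply: funext => X; rewrite mxE; apply: eq_bigr => j _.
  rewrite mxE big_distrl /=; apply: eq_bigr => i _; rewrite !mxE; ring.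
apply: cont_sum => j; apply: cont_sum => i X.
have H := (@continuousM R _ (fun _ => u i 0 * v j 0) (fun X : 'M[R]_n => X i j) X
   (@cst_continuous _ _ (u i 0 * v j 0) X) (@coord_continuous R n n i j X)).
exact H.
Qed.

Lemma closed_q (u v : 'cV[R]_n) : closed [set X : 'M[R]_n | 0 <= (u^T *m X *m v) 0 0].
Proof.
have H := (proj1 (continuous_closedP _) (@cont_q u v) [set x : R | 0 <= x] (@closed_ge R 0)).
exact H.
Qed.

Lemma closed_sym : closed [set X : 'M[R]_n | X^T = X].
Proof.
have -> : [set X : 'M[R]_n | X^T = X] =
  \bigcap_(ij in [set: 'I_n * 'I_n]) [set X | X ij.2 ij.1 - X ij.1 ij.2 = 0].
  apply/seteqP; split => X /=.
    move=> HX [i j] _ /=; rewrite -{1}HX mxE; exact: subrr.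
  move=> H; apply/matrixP => i j; rewrite mxE; apply/eqP; rewrite -subr_eq0.
  by apply/eqP; apply: (H (i, j)).
apply: closed_bigI => -[i j] _.
have H := proj1 (continuous_closedP (fun X : 'M[R]_n => X j i - X i j)) _ [set x : R | x = 0] (@closed_eq R 0).
apply: H => X; apply: continuousB; exact: coord_continuous.
Qed.

End Top.
Section Alg.
Variables (R : realType) (n : nat).
Implicit Types (X Y : 'M[R]_n) (u v w e f x : 'cV[R]_n).

Definition q X u v := (u^T *m X *m v) 0 0.
Definition dot u v := (u^T *m v) 0 0.

Lemma mx11_mul (A B : 'M[R]_1) : (A *m B) 0 0 = A 0 0 * B 0 0.
Proof. by rewrite mxE big_ord1. Qed.

Lemma tr11 (A : 'M[R]_1) : A^T 0 0 = A 0 0.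
Proof. by rewrite mxE. Qed.

Lemma dotC u v : dot u v = dot v u.
Proof. by rewrite /dot -tr11 trmx_mul trmxK. Qed.

Lemma qDl X u1 u2 v : q X (u1 + u2) v = q X u1 v + q X u2 v.
Proof. by rewrite /q linearD /= !mulmxDl mxE. Qed.

Lemma qZl X t u v : q X (t *: u) v = t * q X u v.
Proof. by rewrite /q linearZ /= -!scalemxAl mxE. Qed.

Lemma qDr X u v1 v2 : q X u (v1 + v2) = q X u v1 + q X u v2.
Proof. by rewrite /q mulmxDr mxE. Qed.

Lemma qZr X t u v : q X u (t *: v) = t * q X u v.
Proof. by rewrite /q -scalemxAr mxE. Qed.

Lemma qDm X Y u v : q (X + Y) u v = q X u v + q Y u v.
Proof. by rewrite /q mulmxDr mulmxDl mxE. Qed.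

Lemma qBm X Y u v : q (X - Y) u v = q X u v - q Y u v.
Proof. by rewrite /q mulmxBr mulmxBl !mxE. Qed.

Lemma qZm X t u v : q (t *: X) u v = t * q X u v.
Proof. by rewrite /q -scalemxAr -scalemxAl mxE. Qed.

Lemma q0 u v : q 0 u v = 0.
Proof. by rewrite /q mulmx0 mul0mx mxE. Qed.

Lemma q_sym X u v : X^T = X -> q X u v = q X v u.
Proof. by move=> hX; rewrite /q -tr11 !trmx_mul trmxK hX mulmxA. Qed.

Lemma q_rank1 x u v : q (x *m x^T) u v = dot u x * dot x v.
Proof. by rewrite /q /dot !mulmxA -mx11_mul -mulmxA. Qed.

Lemma q_kill X u f : X *m f = 0 -> q X u f = 0.
Proof. by move=> h; rewrite /q -mulmxA h mulmx0 mxE. Qed.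

Lemma q_sum (s : seq 'cV[R]_n) (F : 'cV[R]_n -> 'M[R]_n) u v :
  q (\sum_(x <- s) F x) u v = \sum_(x <- s) q (F x) u v.
Proof.
elim: s => [|y s IH]; first by rewrite !big_nil q0.
by rewrite !big_cons qDm IH.
Qed.

Lemma q_delta X i f : q X (delta_mx i 0) f = (X *m f) i 0.
Proof. by rewrite /q trmx_delta -mulmxA -rowE mxE. Qed.

Lemma col_eq0 X f : (forall i, q X (delta_mx i 0) f = 0) -> X *m f = 0.
Proof. by move=> h; apply/matrixP => i j; rewrite (ord1 j) -q_delta h mxE. Qed.

Lemma q_expand X v t e : X^T = X ->
  q X (v + t *: e) (v + t *: e) = q X v v + t * q X v e + t * q X v e + t * t * q X e e.
Proof.
move=> hX; rewrite qDl !qDr !qZl !qZr (@q_sym X e v hX); ring.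
Qed.


Lemma psd_zero_diag X e : psd X -> q X e e = 0 -> X *m e = 0.
Proof.
case=> hs hp he; apply: col_eq0 => i.
set d : 'cV[R]_n := delta_mx i 0.
set a := q X d d; set b := q X d e.
have ha : 0 <= a := hp d.
apply/eqP; apply/negPn/negP => hb.
set t := - (a + 1) / (2 * b).
have := hp (d + t *: e).
move=> hh; have : 0 <= q X (d + t *: e) (d + t *: e) by exact: hh. clear hh.
rewrite q_expand // he -/a -/b.
have -> : a + t * b + t * b + t * t * 0 = -1.
  rewrite /t; field. exact: hb.
by rewrite oppr_ge0 ler10.
Qed.

Lemma peel X e : psd X -> 0 < q X e e ->
  let u := (Num.sqrt (q X e e))^-1 *: (X *m e) in
  [/\ psd (X - u *m u^T), (X - u *m u^T) *m e = 0,
      (forall f, X *m f = 0 -> (X - u *m u^T) *m f = 0) &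
      (forall w v, q (u *m u^T) w v = q X w e * q X v e / q X e e)].
Proof.
case=> hsym hp gpos u.
set g := q X e e in gpos *.
set s := Num.sqrt g.
have spos : 0 < s by rewrite sqrtr_gt0.
have hss : s * s = g by rewrite -expr2 sqr_sqrtr // ltW.
have hdot : forall w, dot w u = s^-1 * q X w e.
  by move=> w; rewrite /dot /u -scalemxAr mxE /q mulmxA.
have Hr : forall w v, q (u *m u^T) w v = q X w e * q X v e / g.
  move=> w v; rewrite q_rank1 (dotC u v) !hdot -hss.
  field; exact: lt0r_neq0.
have gne : g != 0 by exact: lt0r_neq0.
have HY : forall w v, q (X - u *m u^T) w v = q X w v - q X w e * q X v e / g.
  by move=> w v; rewrite qBm Hr.
split => //.
- split.
    by rewrite linearB /= trmx_mul trmxK hsym.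
  move=> v; change (0 <= q (X - u *m u^T) v v); rewrite HY.
  set al := q X v v; set be := q X v e.
  have : 0 <= q X (v + (- be / g) *: e) (v + (- be / g) *: e) := hp _.
  rewrite q_expand // -/al -/be -/g.
  have -> : al + - be / g * be + - be / g * be + - be / g * (- be / g) * g
     = al - be * be / g by field.
  done.
- apply: col_eq0 => i; rewrite HY -/g; field => //.
- move=> f hf; apply: col_eq0 => i; rewrite HY (q_kill _ hf).
  rewrite (@q_sym X f e hsym) (q_kill _ hf); ring.
Qed.

Lemma sumsq_eq0 (s : seq 'cV[R]_n) (F : 'cV[R]_n -> R) :
  \sum_(x <- s) F x * F x = 0 -> forall x, x \in s -> F x = 0.
Proof.
elim: s => [|y s IH]; first by [].
rewrite big_cons => /eqP; rewrite paddr_eq0.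
- case/andP => /eqP h1 /eqP h2 x; rewrite in_cons => /orP [/eqP -> | hx].
    by apply/eqP; move: h1 => /eqP; rewrite mulf_eq0 orbb.
  exact: IH.
- by rewrite -expr2 sqr_ge0.
- by apply: sumr_ge0 => x _; rewrite -expr2 sqr_ge0.
Qed.

Lemma chol m : forall X, psd X ->
  (forall j : 'I_n, (m <= j)%N -> X *m (delta_mx j 0 : 'cV[R]_n) = 0) ->
  exists s : seq 'cV[R]_n, X = \sum_(x <- s) x *m x^T.
Proof.
elim: m => [|m IH] X hX hz.
  exists [::]; rewrite big_nil; apply/matrixP => i j.
  have := hz j (leq0n _); rewrite -colE => /(congr1 (fun M : 'cV[R]_n => M i 0)).
  by rewrite !mxE.
case: (ltnP m n) => hmn; last first.
  apply: IH => // j hj; exfalso; move: (leq_trans hmn hj).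
  by rewrite leqNgt ltn_ord.
set j0 : 'I_n := Ordinal hmn.
set e : 'cV[R]_n := delta_mx j0 0.
have g0 : 0 <= q X e e := hX.2 e.
have hsplit : forall (Y : 'M[R]_n), Y *m e = 0 ->
    (forall j : 'I_n, (m < j)%N -> Y *m (delta_mx j 0 : 'cV[R]_n) = 0) ->
    forall j : 'I_n, (m <= j)%N -> Y *m (delta_mx j 0 : 'cV[R]_n) = 0.
  move=> Y hYe hYj j; rewrite leq_eqVlt => /orP [/eqP hj | hj]; last exact: hYj.
  by have -> : j = j0 by apply/val_inj.
rewrite le_eqVlt in g0; case/orP: g0 => [/eqP g | gpos].
  apply: IH => //; apply: hsplit => //.
  exact: psd_zero_diag.
have [hY hYe hYf hr] := peel hX gpos.
set u := (Num.sqrt (q X e e))^-1 *: (X *m e) in hY hYe hYf hr.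
have [s hs] := IH _ hY (hsplit _ hYe (fun j hj => hYf _ (hz j hj))).
exists (u :: s); rewrite big_cons -hs.
by rewrite addrC subrK.
Qed.

Lemma decomp_perp Y c : psd Y -> Y *m c = 0 ->
  exists s : seq 'cV[R]_n, Y = \sum_(x <- s) x *m x^T /\ forall x, x \in s -> dot c x = 0.
Proof.
move=> hY hc.
have [s hs] := chol (m := n) hY (fun j hj => ltac:(exfalso; move: hj; by rewrite leqNgt ltn_ord)).
exists s; split => //.
apply: (@sumsq_eq0 s (fun x => dot c x)).
have := q_kill c hc; rewrite hs q_sum.
by under eq_bigr do rewrite q_rank1 (dotC _ c).
Qed.

End Alg.

Section Main.
Variables (R : realType) (n : nat) (a b c : 'cV[R]_n).
Local Notation S := (two_bilinear_set a b c).

Lemma psd_rank1 (x : 'cV[R]_n) : psd (x *m x^T).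
Proof.
split; first by rewrite trmx_mul trmxK.
move=> v; have -> : (v^T *m (x *m x^T) *m v) 0 0 = q (x *m x^T) v v by [].
by rewrite q_rank1 (dotC x v) -expr2 sqr_ge0.
Qed.

Lemma S0 : S 0.
Proof.
split; first by split; [rewrite trmx0 | move=> v; have := q0 v v; rewrite /q => ->].
by split; [have := q0 a c | have := q0 b c]; rewrite /q => ->.
Qed.

Lemma SD X Y : S X -> S Y -> S (X + Y).
Proof.
move=> [[hs hp] [h1 h2]] [[hs' hp'] [h1' h2']].
split; first split.
- by rewrite linearD /= hs hs'.
- move=> v; have := qDm X Y v v; rewrite /q => ->; apply: addr_ge0; [exact: hp|exact: hp'].
split.
- have := qDm X Y a c; rewrite /q => ->; exact: addr_ge0.
- have := qDm X Y b c; rewrite /q => ->; exact: addr_ge0.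
Qed.

Lemma SZ (t : R) X : 0 <= t -> S X -> S (t *: X).
Proof.
move=> ht [[hs hp] [h1 h2]].
split; first split.
- by rewrite linearZ /= hs.
- move=> v; have := qZm X t v v; rewrite /q => ->; apply: mulr_ge0 => //; exact: hp.
split.
- have := qZm X t a c; rewrite /q => ->; exact: mulr_ge0.
- have := qZm X t b c; rewrite /q => ->; exact: mulr_ge0.
Qed.

Lemma S_rank1 x : 0 <= dot a x * dot x c -> 0 <= dot b x * dot x c -> S (x *m x^T).
Proof.
move=> h1 h2; split; first exact: psd_rank1.
by split; [have := q_rank1 x a c | have := q_rank1 x b c]; rewrite /q => ->.
Qed.

Lemma S_decomp X : S X ->
  exists s : seq 'cV[R]_n, X = \sum_(x <- s) x *m x^T /\ forall x, x \in s -> S (x *m x^T).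
Proof.
move=> [hX [h1 h2]].
have perp : forall x, dot c x = 0 -> S (x *m x^T).
  by move=> x hx; apply: S_rank1; rewrite (dotC x c) hx !mulr0.
have g0 : 0 <= q X c c := hX.2 c.
rewrite le_eqVlt in g0; case/orP: g0 => [/eqP g | gpos].
  have hc := psd_zero_diag hX (esym g).
  have [s [hs hs']] := decomp_perp hX hc.
  by exists s; split => // x /hs' /perp.
have [hY hYe _ hr] := peel hX gpos.
set u := (Num.sqrt (q X c c))^-1 *: (X *m c) in hY hYe hr.
have [s [hs hs']] := decomp_perp hY hYe.
exists (u :: s); split.
  by rewrite big_cons -hs addrC subrK.
move=> x; rewrite in_cons => /orP [/eqP -> | /hs' /perp //].
have gne : q X c c != 0 by exact: lt0r_neq0.
split; first exact: psd_rank1.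
split.
- have -> : (a^T *m (u *m u^T) *m c) 0 0 = q X a c.
    by have := hr a c; rewrite /q => ->; field.
  exact: h1.
- have -> : (b^T *m (u *m u^T) *m c) 0 0 = q X b c.
    by have := hr b c; rewrite /q => ->; field.
  exact: h2.
Qed.

End Main.

Theorem corollary3p6 (R : realType) (n : nat) (a b c : 'cV[R]_n) :
  ROG (two_bilinear_set a b c).
Proof.
split; last split.
- split; last split; [| exact: S0 | split; [exact: SD | exact: SZ]].
  have -> : two_bilinear_set a b c =
    [set X : 'M[R]_n | X^T = X] `&`
    (\bigcap_(v in [set: 'cV[R]_n]) [set X : 'M[R]_n | 0 <= (v^T *m X *m v) 0 0]) `&`
    [set X : 'M[R]_n | 0 <= (a^T *m X *m c) 0 0] `&`
    [set X : 'M[R]_n | 0 <= (b^T *m X *m c) 0 0].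
    apply/seteqP; split => X /=.
      move=> [[hs hp] [h1 h2]]; split => //; split => //; split => // v _; exact: hp.
    move=> [[[hs hp] h1] h2]; split => //; split => // v; exact: hp.
  apply: closedI; last exact: closed_q.
  apply: closedI; last exact: closed_q.
  apply: closedI; first exact: closed_sym.
  apply: closed_bigI => v _; exact: closed_q.
- by move=> X [].
- apply/seteqP; split => X.
    move=> hX; have [s [hs hs']] := S_decomp hX.
    case: s hs hs' => [|x0 s0] hs hs'.
      exists 1%N, (fun _ => 1), (fun _ => 0); split => //; split; first by rewrite big_ord1.
      split.
        move=> i; split; first exact: S0.
        by exists 0; rewrite mul0mx.
      by rewrite big_ord1 scale1r hs big_nil.
    set s := x0 :: s0 in hs hs'.
    have kpos : (size s)%:R != 0 :> R by rewrite pnatr_eq0.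
    exists (size s), (fun _ => (size s)%:R^-1),
      (fun i => (size s)%:R *: (nth 0 s i *m (nth 0 s i)^T)).
    split; first by move=> i; rewrite invr_ge0 ler0n.
    split; first by rewrite sumr_const card_ord -[LHS]mulr_natr mulVf.
    split.
      move=> i; have hi : nth 0 s i \in s by apply: mem_nth.
      split; first by apply: SZ; [exact: ler0n | exact: hs'].
      exists (Num.sqrt (size s)%:R *: nth 0 s i).
      rewrite linearZ /= -scalemxAl -scalemxAr scalerA -expr2 sqr_sqrtr //.
    rewrite hs (big_nth 0) big_mkord; apply: eq_bigr => i _.
    by rewrite scalerA mulVf // scale1r.
  move=> [k [w [Y [hw [_ [hY ->]]]]]].
  apply: (big_ind (fun M => two_bilinear_set a b c M)).
  + exact: S0.
  + by move=> M N; apply: SD.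
  + move=> i _; apply: SZ; [exact: hw | exact: (hY i).1].
Qed.
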